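(* Let $A,B,C\in\mathbb{C}$ with $B\neq C$, and let $A'$ be the reflection of $A$ in the line $BC$. Define points $W_{-1},W_0,\dots,W_5$ by $$W_{-1}=C,\quad W_0=B,\quad W_{k+1}=W_k+\rho^{-1}(W_{k-1}-W_k)\ (k\ge 0).$$ Then $W_0,\dots,W_5$ are the vertices of the regular hexagon on $BC$, in counterclockwise order, and $W_5=C$. Define $T_0=A$ and $T_{k+1}=W_k+\rho\,(T_k-W_k)$ for $k=0,\dots,4$. For $k=1,\dots,5$ let $F_k$ be the triangle with vertices $W_{k-1},T_k,W_k$, with base $W_{k-1}W_k$ and apex $T_k$. Then for every $k=1,\dots,5$, the reflection of the apex $T_k$ in the line $W_{k-1}W_k$ equals $A'$.
   Context: The plane is identified with $\mathbb{C}$, and $\rho=e^{2\pi i/3}$. Geometric meaning of the construction: - For counterclockwise $(A,B,C)$, the hexagon $W_0\cdots W_5$ is the regular hexagon $H_0$ erected outwardly on $BC$. - $F_1$ is the flank triangle at $B$ between $H_0$ and the hexagon erected on $AB$. - Each subsequent $F_{k+1}$ is the flank triangle at $W_k$ between $H_0$ and the regular hexagon erected on the side $W_kT_k$ of $F_k$. - $T_{k+1}$ is the vertex of that hexagon adjacent to $W_k$. *)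

(* Defs.v *)
(* the plane is a numClosedFieldType K (e.g. algC, or R[i]),
   with imaginary unit 'i, conjugation ^*, and square root sqrtC. *)
From HB Require Import structures.
From mathcomp Require Import all_boot all_order all_algebra.
Set Implicit Arguments. Unset Strict Implicit. Unset Printing Implicit Defensive.
Import Order.TTheory GRing.Theory Num.Theory.
Local Open Scope ring_scope.

Section Hex.
Variable K : numClosedFieldType.

(* rho = e^{2 pi i / 3} = -1/2 + i sqrt(3)/2 *)
Definition rho : K := - (1 / 2%:R) + 'i * (sqrtC 3%:R / 2%:R).

(* reflection of P in the line through U and V (U <> V) *)
Definition refl (U V P : K) : K := U + (V - U) * ((P - U) / (V - U))^*.

(* Wpair B C n = (W_{n-1}, W_n) with W_{-1} = C, W_0 = B,
   W_{k+1} = W_k + rho^{-1} (W_{k-1} - W_k). *)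
Fixpoint Wpair (B C : K) (n : nat) : K * K :=
  match n with
  | 0 => (C, B)
  | n'.+1 => let: (a, b) := Wpair B C n' in (b, b + rho^-1 * (a - b))
  end.

Definition W (B C : K) (k : nat) : K := (Wpair B C k).2.

Fixpoint T (A B C : K) (n : nat) : K :=
  match n with
  | 0 => A
  | n'.+1 => W B C n' + rho * (T A B C n' - W B C n')
  end.
End Hex.

(* Main.v *)
Require Import Defs.
From mathcomp Require Import all_boot all_order all_algebra.
From mathcomp Require Import ring.
Import Order.TTheory GRing.Theory Num.Theory.
Local Open Scope ring_scope.

Section Aux.
Variable K : numClosedFieldType.

Lemma two_neq0 : (2%:R : K) != 0.
Proof. by rewrite pnatr_eq0. Qed.

Lemma rho_conj : (rho K)^* = - (1 / 2%:R) - 'i * (sqrtC 3%:R / 2%:R).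
Proof.
rewrite /rho rmorphD rmorphN rmorphM /= conjCi !fmorph_div /= rmorph1 !rmorph_nat /=.
rewrite (geC0_conj (x := sqrtC 3%:R)) ?sqrtC_ge0 ?ler0n //.
by rewrite mulNr.
Qed.

Lemma rho_sq : (rho K)^+2 + rho K + 1 = 0.
Proof.
rewrite /rho.
have h2 := two_neq0.
have hi : ('i : K) ^+ 2 = -1 := sqrCi K.
have h3 : sqrtC (3%:R : K) ^+ 2 = 3%:R := sqrtCK _.
set i := ('i : K) in hi *. set q := sqrtC (3%:R : K) in h3 *.
have -> : (- (1 / 2%:R) + i * (q / 2%:R)) ^+ 2 + (- (1 / 2%:R) + i * (q / 2%:R)) + 1
  = ((i^+2) * (q^+2) + 3%:R) / 4%:R by field; rewrite ?pnatr_eq0.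
by rewrite hi h3 mulN1r addNr mul0r.
Qed.

Lemma rho_norm : rho K * (rho K)^* = 1.
Proof.
rewrite rho_conj /rho.
have h2 := two_neq0.
have hi : ('i : K) ^+ 2 = -1 := sqrCi K.
have h3 : sqrtC (3%:R : K) ^+ 2 = 3%:R := sqrtCK _.
set i := ('i : K) in hi *. set q := sqrtC (3%:R : K) in h3 *.
have -> : (- (1 / 2%:R) + i * (q / 2%:R)) * (- (1 / 2%:R) - i * (q / 2%:R))
  = (1 - (i^+2) * (q^+2)) / 4%:R by field; rewrite ?pnatr_eq0.
rewrite hi h3 mulN1r opprK.
have h4 : (4%:R : K) != 0 by rewrite pnatr_eq0.
by field.
Qed.

Lemma rho_neq0 : rho K != 0.
Proof. by apply/eqP => h; have := rho_norm; rewrite h mul0r => /eqP; rewrite eq_sym oner_eq0. Qed.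

Lemma rho_conjV : (rho K)^* = (rho K)^-1.
Proof.
by apply: (mulfI rho_neq0); rewrite rho_norm divff // rho_neq0.
Qed.

Lemma rho_cube : (rho K)^+3 = 1.
Proof.
have h := rho_sq.
have -> : rho K ^+ 3 = (rho K - 1) * (rho K ^+ 2 + rho K + 1) + 1 by ring.
by rewrite h mulr0 add0r.
Qed.

Lemma refl_sym (U V P : K) : U != V -> refl V U P = refl U V P.
Proof.
move=> hUV; rewrite /refl.
have hd : V - U != 0 by rewrite subr_eq0 eq_sym.
have hd' : U - V != 0 by rewrite subr_eq0.
have -> : (P - V) / (U - V) = 1 - (P - U) / (V - U).
  by field; rewrite hd hd'.
rewrite raddfB /= rmorph1; ring.
Qed.

Lemma step (a b t : K) : a != b ->
  refl b (b + (rho K)^-1 * (a - b)) (b + rho K * (t - b)) = refl a b t.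
Proof.
move=> hab; have hba : b != a by rewrite eq_sym.
rewrite (refl_sym b a t hba).
rewrite /refl.
have hr := rho_neq0.
have hd : a - b != 0 by rewrite subr_eq0.
have -> : (b + rho K * (t - b) - b) / (b + (rho K)^-1 * (a - b) - b)
   = (rho K)^+2 * ((t - b) / (a - b)).
  by field; rewrite hd hr.
rewrite (rmorphM Num.conj_op) (rmorphXn Num.conj_op) /= rho_conjV.
have hc := rho_cube.
set z := ((t - b) / (a - b))^*; clearbody z.
have -> : b + (b + (rho K)^-1 * (a - b) - b) * ((rho K)^-1 ^+ 2 * z)
  = b + (a - b) * z * (rho K ^+ 3)^-1.
  by field; rewrite hr.
by rewrite hc invr1 mulr1.
Qed.

End Aux.

Theorem mainTheorem4 (K : numClosedFieldType) (A B C : K) :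
  B != C ->
  W B C 5 = C /\
  (forall k : nat, (1 <= k <= 5)%N ->
     refl (W B C k.-1) (W B C k) (T A B C k) = refl B C A).
Proof.
move=> hBC.
have hr := rho_neq0 K.
have hs := rho_sq K.
split.
  rewrite /W /=.
  apply/eqP; rewrite -subr_eq0; apply/eqP.
  set s := (rho K)^-1.
  have hs' : s ^+ 2 + s + 1 = 0.
    have -> : s ^+ 2 + s + 1 = (rho K ^+ 2 + rho K + 1) / (rho K ^+ 2) by rewrite /s; field.
    by rewrite hs mul0r.
  set e := (X in X = 0).
  have -> : e = (B - C) * (1 - s) * (s ^+ 2 - s + 1) * (s ^+ 2 + s + 1) by rewrite /e; ring.
  by rewrite hs' mulr0.
have key : forall k, (Wpair B C k).1 != (Wpair B C k).2 /\
   refl (Wpair B C k).1 (Wpair B C k).2 (T A B C k) = refl C B A.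
  elim=> [|k [hne IH]] /=; first by rewrite eq_sym hBC.
  rewrite /W; case: (Wpair B C k) hne IH => a b /= hne IH; split.
    rewrite -subr_eq0 opprD addNKr oppr_eq0 mulf_eq0 invr_eq0 (negPf hr) /=.
    by rewrite subr_eq0.
  by rewrite step.
move=> [|k] // /andP [_ hk] /=.
have [_ h] := key k.+1.
have hCB : C != B by rewrite eq_sym.
rewrite (@refl_sym K C B A hCB) -h; congr refl.
by rewrite /W /=; case: (Wpair B C k).
Qed.
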